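(* Let $\mathcal{G}$ be a directed graph without self-loops with vertices $v_1,\dots,v_k$, and let $A_1,\dots,A_k$ be real $2\times 2$ matrices. Suppose there exist invertible matrices $P_1,\dots,P_k$ and Jordan matrices $J_1,\dots,J_k$ with $A_i=P_iJ_iP_i^{-1}$ a Jordan decomposition of $A_i$, such that for each $(r,s)\in\mathcal{E}(\mathcal{G})$ there exists $\eta_{(r,s)}>0$ with $\Vert P_s^{-1}P_re^{\eta_{(r,s)}J_r}\Vert<1$. Then for every loop $(i_1,\dots,i_p,i_1)$ in $\mathcal{G}$, the traces of $A_{i_1},\dots,A_{i_p}$ are not all non-negative, i.e. $\operatorname{trace}(A_{i_j})<0$ for at least one $j\in\{1,\dots,p\}$.
   Context: $\mathcal{E}(\mathcal{G})$ is the set of ordered pairs $(i,j)$ such that there is a directed edge from $v_i$ to $v_j$. A loop $(i_1,\dots,i_p,i_1)$ is a sequence of vertices $v_{i_1},\dots,v_{i_p},v_{i_1}$ with a directed edge from each vertex to the next. $\Vert\cdot\Vert$ denotes the spectral norm. *)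

(* Defs.v *)
From HB Require Import structures.
From mathcomp Require Import all_boot all_order all_algebra.
From mathcomp Require Import all_classical all_reals all_analysis.
From mathcomp.real_closed Require Import complex.
Import Order.TTheory GRing.Theory Num.Theory.
Import numFieldNormedType.Exports.

Set Implicit Arguments.
Unset Strict Implicit.
Unset Printing Implicit Defensive.

Local Open Scope ring_scope.
Local Open Scope classical_set_scope.

Definition cplx_mx (R : rcfType) (m n : nat) (A : 'M[R]_(m, n)) : 'M[R[i]]_(m, n) :=
  map_mx (fun x : R => x%:C%C) A.

Definition expmx (R : realType) (n : nat) (M : 'M[R[i]]_n.+1) : 'M[R[i]]_n.+1 :=
  limn (fun N : nat => \sum_(j < N) (j`!%:R)^-1 *: M ^+ j).

Definition vnorm2 (R : rcfType) (n : nat) (v : 'cV[R[i]]_n) : R :=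
  Num.sqrt (\sum_(j < n) (Normc.normc (v j 0)) ^+ 2).

Definition specnorm (R : realType) (m n : nat) (M : 'M[R[i]]_(m, n)) : R :=
  sup [set r : R | exists v : 'cV[R[i]]_n, vnorm2 v <= 1 /\ r = vnorm2 (M *m v)].

(* A 2x2 Jordan matrix (block diagonal with Jordan blocks): upper triangular,
   and the superdiagonal entry is 0, or it is 1 and the two diagonal entries
   (eigenvalues) coincide. *)
Definition is_jordan2 (R : rcfType) (J : 'M[R[i]]_2) : Prop :=
  J 1 0 = 0 /\ (J 0 1 = 0 \/ (J 0 1 = 1 /\ J 0 0 = J 1 1)).

Definition no_self_loops (k : nat) (E : rel 'I_k) : Prop := forall i, ~~ E i i.

(* A loop (i_1, ..., i_p, i_1): a nonempty sequence of vertices with an edge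
   from each vertex to the next and from the last back to the first. *)
Definition is_loop (k : nat) (E : rel 'I_k) (s : seq 'I_k) : Prop :=
  s != [::] /\ cycle E s.

(* Main.v *)
Require Import Defs.
From HB Require Import structures.
From mathcomp Require Import all_boot all_order all_algebra.
From mathcomp Require Import all_classical all_reals all_analysis.
From mathcomp.real_closed Require Import complex.
From mathcomp Require Import ring lra.
Import Order.TTheory GRing.Theory Num.Theory.
Import numFieldNormedType.Exports.
Local Open Scope ring_scope.
Local Open Scope classical_set_scope.

Section Alg.
Variable F : numFieldType.

Definition es (z : F) (N : nat) := \sum_(j < N) (j`!%:R)^-1 * z ^+ j.
Definition gg (z w : F) (i j : nat) := (i`!%:R)^-1 * z ^+ i * ((j`!%:R)^-1 * w ^+ j).

Lemma fact_neq0 n : (n`!%:R : F) != 0.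
Proof. by rewrite pnatr_eq0 -lt0n fact_gt0. Qed.

Lemma binom_term (z w : F) n :
  (n`!%:R)^-1 * (z + w) ^+ n = \sum_(0 <= i < n.+1) gg z w i (n - i)%N.
Proof.
rewrite addrC exprDn big_mkord mulr_sumr; apply: eq_bigr => i _.
have hi : (i <= n)%N by rewrite -ltnS.
rewrite /gg -mulr_natr.
have := bin_fact hi => /(congr1 (fun k => (k%:R : F))).
rewrite !natrM => hb.
have h1 := fact_neq0 i; have h2 := fact_neq0 (n - i)%N; have h3 := fact_neq0 n.
rewrite -hb.
field.
by rewrite h1 h2 pnatr_eq0 -lt0n bin_gt0.
Qed.

Lemma tri_sum (h : nat -> nat -> F) N :
  \sum_(0 <= n < N) \sum_(0 <= i < n.+1) h i (n - i)%N =
  \sum_(0 <= i < N) \sum_(0 <= j < (N - i)%N) h i j.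
Proof.
elim: N => [|N IH]; first by rewrite !big_geq.
rewrite big_nat_recr //= IH.
have E : \sum_(0 <= i < N.+1) \sum_(0 <= j < (N.+1 - i)%N) h i j =
    \sum_(0 <= i < N.+1) (\sum_(0 <= j < (N - i)%N) h i j + h i (N - i)%N).
  apply: eq_big_nat => i /andP [_ hi].
  by rewrite subSn -1?ltnS // big_nat_recr.
rewrite E big_split /=; congr (_ + _).
by rewrite [RHS]big_nat_recr //= [X in _ + X]big_geq ?subnn ?addr0.
Qed.

Lemma es_diff (z w : F) N :
  es z N * es w N - es (z + w) N = \sum_(0 <= i < N) \sum_((N - i)%N <= j < N) gg z w i j.
Proof.
rewrite /es.
have -> : \sum_(j < N) (j`!%:R)^-1 * (z + w) ^+ j = \sum_(0 <= i < N) \sum_(0 <= j < (N - i)%N) gg z w i j.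
  rewrite -tri_sum (big_mkord xpredT (fun n => \sum_(0 <= i < n.+1) gg z w i (n - i)%N)).
  by apply: eq_bigr => n _; rewrite binom_term.
have -> : (\sum_(j < N) (j`!%:R)^-1 * z ^+ j) * (\sum_(j < N) (j`!%:R)^-1 * w ^+ j) =
    \sum_(0 <= i < N) \sum_(0 <= j < N) gg z w i j.
  rewrite big_mkord mulr_suml; apply: eq_bigr => i _.
  by rewrite big_mkord mulr_sumr; apply: eq_bigr => j _; rewrite /gg mulrA.
rewrite -sumrB; apply: eq_big_nat => i /andP [_ hi].
rewrite (@big_cat_nat _ _ _ (N - i)%N 0 N) ?leq_subr //=.
by rewrite addrC addrK.
Qed.
End Alg.
Arguments es {F}.
Arguments gg {F}.
Arguments es_diff {F}.
Arguments binom_term {F}.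
Arguments tri_sum {F}.

Lemma sum2 (V : zmodType) (F : 'I_2 -> V) : \sum_(l < 2) F l = F 0 + F 1.
Proof.
rewrite big_ord_recl big_ord_recl big_ord0 addr0.
by congr (F _ + F _); apply: val_inj.
Qed.

Lemma det2 (F : comRingType) (A : 'M[F]_2) : \det A = A 0 0 * A 1 1 - A 0 1 * A 1 0.
Proof.
rewrite (expand_det_row _ 0) sum2 /cofactor !det_mx11 !mxE.
have l0 : lift (0 : 'I_2) (0 : 'I_1) = 1 by apply: val_inj.
have l1 : lift (1 : 'I_2) (0 : 'I_1) = 0 by apply: val_inj.
by rewrite l0 l1 /= expr0 expr1 !mul1r mulN1r mulrN.
Qed.

Section S.
Variable R : realType.
Notation C := (Num.NumField.sort (complex_complex__canonical__Num_NumField (reals_Real__to__Num_RealClosedField R))).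
Local Notation nc := (@Normc.normc R).

Lemma normcE (z : C) : `|z| = (nc z)%:C%C.
Proof. by case: z. Qed.

Lemma nc_ge0 (z : R[i]) : 0 <= nc z.
Proof. by case: z => a b; rewrite /Normc.normc sqrtr_ge0. Qed.

Lemma nc_real (x : R) : nc (x%:C%C) = `|x|.
Proof. by rewrite /Normc.normc /= expr0n /= addr0 sqrtr_sqr. Qed.

Lemma nc_Re (z : R[i]) : `|complex.Re z| <= nc z.
Proof.
case: z => a b /=; rewrite /Normc.normc -(sqrtr_sqr a) ler_wsqrtr //.
by rewrite lerDl sqr_ge0.
Qed.

Lemma nc_Im (z : R[i]) : `|complex.Im z| <= nc z.
Proof.
case: z => a b /=; rewrite /Normc.normc -(sqrtr_sqr b) ler_wsqrtr //.
by rewrite lerDr sqr_ge0.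
Qed.

Lemma nc_ReIm (z : R[i]) : nc z <= `|complex.Re z| + `|complex.Im z|.
Proof.
case: z => a b /=; rewrite /Normc.normc.
have ha : `|a| ^+ 2 = a ^+ 2 by rewrite real_normK ?num_real.
have hb : `|b| ^+ 2 = b ^+ 2 by rewrite real_normK ?num_real.
have h : a ^+ 2 + b ^+ 2 <= (`|a| + `|b|) ^+ 2.
  have := normr_ge0 a; have := normr_ge0 b; nra.
apply: (le_trans (ler_wsqrtr h)).
by rewrite sqrtr_sqr ger0_norm // addr_ge0.
Qed.

Lemma nc_sum (I : Type) (s : seq I) (f : I -> R[i]) :
  nc (\sum_(i <- s) f i) <= \sum_(i <- s) nc (f i).
Proof.
elim: s => [|a s IH]; first by rewrite !big_nil Normc.normc0.
rewrite !big_cons (le_trans (le_normcD _ _)) // lerD2l //.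
Qed.

Lemma Re_sum N (u : nat -> R[i]) : complex.Re (\sum_(j < N) u j) = \sum_(j < N) complex.Re (u j).
Proof.
elim: N => [|N IH]; first by rewrite !big_ord0.
by rewrite !big_ord_recr /= -IH; case: (\sum_(i < N) u i) => ? ?; case: (u N).
Qed.

Lemma Im_sum N (u : nat -> R[i]) : complex.Im (\sum_(j < N) u j) = \sum_(j < N) complex.Im (u j).
Proof.
elim: N => [|N IH]; first by rewrite !big_ord0.
by rewrite !big_ord_recr /= -IH; case: (\sum_(i < N) u i) => ? ?; case: (u N).
Qed.

Lemma cvgC (u : nat -> C) (l : C) :
  (forall e : R, 0 < e -> \forall N \near \oo, nc (l - u N) < e) -> u @ \oo --> l.
Proof.
move=> H; apply/cvgrPdist_lt => eps.
case: eps => a b; rewrite ltcE /= => /andP [/eqP -> a0].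
near=> N; rewrite normcE ltcR; near: N; exact: H.
Unshelve. all: by end_near. Qed.

Lemma real_ser_cvg (w v : nat -> R) : (forall j, `|w j| <= v j) ->
  cvgn (series v) -> cvgn (series w).
Proof.
move=> Hwv Hv.
have Hn : cvgn [normed series w].
  apply: (series_le_cvg _ _ Hwv Hv) => n //.
  exact: le_trans (normr_ge0 _) (Hwv n).
exact: (@normed_cvg R R^o).
Qed.

Lemma cser (u : nat -> C) (v : nat -> R) : (forall j, nc (u j) <= v j) ->
  cvgn (series v) -> exists l : C, (fun N => \sum_(j < N) u j) @ \oo --> l.
Proof.
move=> Huv Hv.
have H1 := @real_ser_cvg (fun j => complex.Re (u j)) v (fun j => le_trans (nc_Re (u j)) (Huv j)) Hv.
have H2 := @real_ser_cvg (fun j => complex.Im (u j)) v (fun j => le_trans (nc_Im (u j)) (Huv j)) Hv.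
exists (limn (series (fun j => complex.Re (u j))) +i* limn (series (fun j => complex.Im (u j))))%C.
apply: cvgC => e e0.
move/cvgrPdist_lt: H1 => /(_ (e/2)) H1.
move/cvgrPdist_lt: H2 => /(_ (e/2)) H2.
have e20 : 0 < e / 2 by rewrite divr_gt0.
near=> N.
apply: (le_lt_trans (nc_ReIm _)).
rewrite (splitr e) ltrD //=.
  rewrite (_ : forall x y (S : R[i]), complex.Re ((x +i* y)%C - S) = x - complex.Re S); last by move=> x y [].
  rewrite Re_sum; near: N; apply: filterS (H1 e20) => N.
  by rewrite /series /= big_mkord.
rewrite (_ : forall x y (S : R[i]), complex.Im ((x +i* y)%C - S) = y - complex.Im S); last by move=> x y [].
rewrite Im_sum; near: N; apply: filterS (H2 e20) => N.
by rewrite /series /= big_mkord.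
Unshelve. all: by end_near. Qed.

Lemma nc_exp (z : R[i]) n : nc (z ^+ n) = nc z ^+ n.
Proof.
elim: n => [|n IH]; first by rewrite !expr0 Normc.normc1.
by rewrite !exprS Normc.normcM IH.
Qed.

Lemma invfactC n : ((n`!%:R)^-1 : R[i]) = (((n`!%:R : R)^-1)%:C)%C.
Proof. by rewrite (fmorphV (real_complex R)) rmorph_nat. Qed.

Lemma nc_invfact n : nc ((n`!%:R)^-1 : R[i]) = (n`!%:R)^-1.
Proof. by rewrite invfactC nc_real ger0_norm // invr_ge0. Qed.

Lemma nc_gg (z w : C) i j : nc (gg z w i j) = gg (nc z) (nc w) i j.
Proof. by rewrite /gg !Normc.normcM !nc_invfact !nc_exp. Qed.

Lemma es_bound (z w : C) N :
  nc (es z N * es w N - es (z + w) N) <=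
  es (nc z) N * es (nc w) N - es (nc z + nc w) N.
Proof.
rewrite !es_diff (le_trans (nc_sum _ _ _)) //; apply: ler_sum => i _.
rewrite (le_trans (nc_sum _ _ _)) //; apply: ler_sum => j _.
by rewrite nc_gg.
Qed.

Lemma es_real_cvg (x : R) : es x @ \oo --> expR x.
Proof.
have -> : es x = series (exp_coeff x).
  apply/funext => N; rewrite /es /series /= big_mkord; apply: eq_bigr => j _.
  by rewrite /exp_coeff /= mulrC.
exact: is_cvg_series_exp_coeff.
Qed.

Lemma es_mul (z w ez ew : C) : es z @ \oo --> ez -> es w @ \oo --> ew ->
  es (z + w) @ \oo --> ez * ew.
Proof.
move=> hz hw.
have hd : (fun N => es z N * es w N - es (z + w) N) @ \oo --> (0 : C).
  apply: cvgC => e e0.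
  have hr : (fun N => es (nc z) N * es (nc w) N - es (nc z + nc w) N) @ \oo --> (0 : R).
    have h1 : (fun N => es (nc z) N * es (nc w) N) @ \oo --> expR (nc z) * expR (nc w).
      by apply: cvgM; exact: es_real_cvg.
    have h2 := es_real_cvg (nc z + nc w).
    have := cvgB h1 h2.
    by rewrite -expRD subrr; move=> h; exact: h.
  move/cvgrPdist_lt: hr => /(_ e e0); apply: filterS => N hN.
  rewrite sub0r (@normcN _ (es z N * es w N - es (z + w) N)).
  apply: le_lt_trans (es_bound z w N) _.
  by apply: le_lt_trans hN; rewrite sub0r normrN ler_norm.
have -> : es (z + w) = (fun N => es z N * es w N - (es z N * es w N - es (z + w) N)).
  by apply/funext => N; rewrite opprB addrCA subrr addr0.
have hp : (fun N => es z N * es w N) @ \oo --> ez * ew.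
  exact: (cvgM hz hw).
have hq := (cvgB hp hd).
rewrite subr0 in hq.
exact: hq.
Qed.

Lemma es_realC (x : R) N : es ((x%:C)%C : C) N = ((es x N)%:C)%C.
Proof.
rewrite /es rmorph_sum; apply: eq_bigr => j _.
by rewrite rmorphM /= rmorphXn invfactC.
Qed.

Lemma es_realC_cvg (x : R) : es ((x%:C)%C : C) @ \oo --> (((expR x)%:C)%C : C).
Proof.
apply: cvgC => e e0.
have := es_real_cvg x; move/cvgrPdist_lt => /(_ e e0); apply: filterS => N hN.
by rewrite es_realC -rmorphB nc_real.
Qed.

Lemma mx_cvg_entries (X : nat -> 'M[C]_2) (L : 'M[C]_2) :
  (forall a b, (fun N => X N a b) @ \oo --> L a b) -> X @ \oo --> L.
Proof.
move=> H A /= [P HP sub].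
have : \forall N \near \oo, forall a b, P a b (X N a b).
  apply: filter_forall => a; apply: filter_forall => b; exact: (H a b _ (HP a b)).
by apply: filterS => N hN; apply: sub.
Qed.

Lemma mx_pow_bound (M : 'M[C]_2) j a b :
  nc ((M ^+ j) a b) <= (\sum_a' \sum_b' nc (M a' b')) ^+ j.
Proof.
set m := \sum_a' \sum_b' nc (M a' b').
elim: j a b => [|j IH] a b.
  rewrite !expr0 mxE; case: (a == b) => /=.
    by rewrite expr1n expr0n /= addr0 sqrtr1.
  by rewrite expr0n /= addr0 sqrtr0 ler01.
rewrite exprSr -mulmxE mxE exprSr.
apply: (le_trans (nc_sum _ _ _)).
apply: (@le_trans _ _ (\sum_(l < 2) m ^+ j * nc (M l b))).
  apply: ler_sum => l _; rewrite Normc.normcM ler_wpM2r //; first exact: nc_ge0.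
rewrite -mulr_sumr ler_wpM2l //; first by rewrite exprn_ge0 // /m sumr_ge0 // => i _; rewrite sumr_ge0 // => k _; exact: nc_ge0.
rewrite /m; apply: ler_sum => l _.
rewrite (bigD1 b) //= lerDl sumr_ge0 // => k _; exact: nc_ge0.
Qed.

Lemma mx_exp_entry (M : 'M[C]_2) N a b :
  (\sum_(j < N) (j`!%:R)^-1 *: M ^+ j) a b = \sum_(j < N) (j`!%:R)^-1 * (M ^+ j) a b.
Proof. by rewrite summxE; apply: eq_bigr => j _; rewrite mxE. Qed.

Lemma mx_exp_cvg (M : 'M[C]_2) : exists L : 'M[C]_2,
  (fun N => \sum_(j < N) (j`!%:R)^-1 *: M ^+ j) @ \oo --> L /\
  forall a b, (fun N => \sum_(j < N) (j`!%:R)^-1 * (M ^+ j) a b) @ \oo --> L a b.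
Proof.
set m := \sum_a' \sum_b' nc (M a' b').
have H : forall ab : 'I_2 * 'I_2, exists l : C,
    (fun N => \sum_(j < N) (j`!%:R)^-1 * (M ^+ j) ab.1 ab.2) @ \oo --> l.
  move=> [a b]; apply: (@cser (fun j => (j`!%:R)^-1 * (M ^+ j) a b) (exp_coeff m)); last exact: is_cvg_series_exp_coeff.
  move=> j; rewrite Normc.normcM nc_invfact /exp_coeff /= [leRHS]mulrC ler_wpM2l ?invr_ge0 //.
  exact: mx_pow_bound.
have [f hf] := choice H.
have he : forall a b, (fun N => \sum_(j < N) (j`!%:R)^-1 * (M ^+ j) a b) @ \oo -->
    (\matrix_(a, b) f (a, b) : 'M[C]_2) a b.
  by move=> a b; rewrite mxE; exact: (hf (a, b)).
exists (\matrix_(a, b) f (a, b)); split => //.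
apply: mx_cvg_entries => a b.
have -> : (fun N => (\sum_(j < N) (j`!%:R)^-1 *: M ^+ j) a b) =
    (fun N => \sum_(j < N) (j`!%:R)^-1 * (M ^+ j) a b).
  by apply/funext => N; exact: mx_exp_entry.
exact: he.
Qed.

Lemma mx_pow_tri (J : 'M[C]_2) : J 1 0 = 0 -> forall j,
  (J ^+ j) 1 0 = 0 /\ (J ^+ j) 0 0 = J 0 0 ^+ j /\ (J ^+ j) 1 1 = J 1 1 ^+ j.
Proof.
move=> hJ; elim=> [|j [h10 [h00 h11]]].
  by rewrite !expr0 !mxE.
rewrite !exprSr -mulmxE !mxE !sum2 h10 h00 h11 hJ.
by rewrite !mul0r !mulr0 !add0r !addr0.
Qed.

Lemma expmx_eq (M : 'M[R[i]]_2) (L : 'M[C]_2) :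
  (fun N : nat => \sum_(j < N) (j`!%:R)^-1 *: M ^+ j : 'M[C]_2) @ \oo --> L -> expmx M = L.
Proof. move=> H; rewrite /expmx; apply: (cvg_lim _ H); exact: norm_hausdorff. Qed.

Lemma expmx_det (J : 'M[C]_2) (c : C) : J 1 0 = 0 -> exists e0 e1 : C,
  es (c * J 0 0) @ \oo --> e0 /\ es (c * J 1 1) @ \oo --> e1 /\
  \det (expmx (c *: J)) = e0 * e1.
Proof.
move=> hJ.
set M : 'M[C]_2 := c *: J.
have M10 : M 1 0 = 0 by rewrite mxE hJ mulr0.
have [L [hL hE]] := mx_exp_cvg M.
have eL : expmx M = L := expmx_eq M L hL.
have tri := mx_pow_tri M M10.
have seqE : forall a, (fun N => \sum_(j < N) (j`!%:R)^-1 * (M ^+ j) a a) =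
    es (M a a) -> (fun N => es (M a a) N) @ \oo --> L a a.
  by move=> a <-; exact: hE.
exists (L 0 0), (L 1 1); split; [|split].
- have <- : M 0 0 = c * J 0 0 by rewrite mxE.
  apply: seqE; apply/funext => N; apply: eq_bigr => j _; by case: (tri j) => _ [-> _].
- have <- : M 1 1 = c * J 1 1 by rewrite mxE.
  apply: seqE; apply/funext => N; apply: eq_bigr => j _; by case: (tri j) => _ [_ ->].
have L10 : L 1 0 = 0.
  have h := hE 1 0.
  have e0 : (fun N => \sum_(j < N) (j`!%:R)^-1 * (M ^+ j) 1 0) = (fun _ => (0 : C)).
    by apply/funext => N; rewrite big1 // => j _; case: (tri j) => -> _; rewrite mulr0.
  rewrite e0 in h.
  have := cvg_lim (@norm_hausdorff _ _) h.
  rewrite lim_cst // => H0; rewrite H0 //; exact: eventually_filter.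
transitivity (\det L); first by congr (\det _); exact: eL.
by rewrite det2 L10 mulr0 subr0.
Qed.

Lemma det_expmx_real (J : 'M[C]_2) (eta t : R) : J 1 0 = 0 -> J 0 0 + J 1 1 = (t%:C)%C ->
  \det (expmx ((eta%:C)%C *: J)) = ((expR (eta * t))%:C)%C.
Proof.
move=> hJ ht.
have [e0 [e1 [h0 [h1 ->]]]] := expmx_det J (eta%:C)%C hJ.
have h := es_mul _ _ _ _ h0 h1.
rewrite -mulrDr ht -rmorphM in h.
have h2 := es_realC_cvg (eta * t).
by rewrite -(cvg_lim (@norm_hausdorff _ _) h) (cvg_lim (@norm_hausdorff _ _) h2).
Qed.

Lemma vnorm2E (v : 'cV[R[i]]_2) : vnorm2 v = Num.sqrt (nc (v 0 0) ^+ 2 + nc (v 1 0) ^+ 2).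
Proof. by rewrite /vnorm2 sum2. Qed.

Lemma sqrt_lt1 (p : R) : 0 <= p -> Num.sqrt p < 1 -> p < 1.
Proof.
move=> p0 h; have := sqr_sqrtr p0; have := sqrtr_ge0 p => h1 h2.
rewrite -h2; nra.
Qed.

Lemma sqrt_le1 (p : R) : 0 <= p -> Num.sqrt p <= 1 -> p <= 1.
Proof.
move=> p0 h; have := sqr_sqrtr p0; have := sqrtr_ge0 p => h1 h2.
rewrite -h2; nra.
Qed.

Lemma mulmx_col (M : 'M[R[i]]_2) (v : 'cV[R[i]]_2) i : (M *m v) i 0 = M i 0 * v 0 0 + M i 1 * v 1 0.
Proof. by rewrite mxE sum2. Qed.

Lemma specnorm_col (M : 'M[R[i]]_2) (k : 'I_2) : specnorm M < 1 ->
  nc (M 0 k) ^+ 2 + nc (M 1 k) ^+ 2 < 1.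
Proof.
move=> hM.
set S := [set r : R | exists v : 'cV[R[i]]_2, vnorm2 v <= 1 /\ r = vnorm2 (M *m v)].
set m := \sum_a \sum_b nc (M a b).
have m0 : 0 <= m by rewrite sumr_ge0 // => a _; rewrite sumr_ge0 // => b _; exact: nc_ge0.
have Mab : forall a b, nc (M a b) <= m.
  move=> a b; rewrite /m (bigD1 a) //= (bigD1 b) //= -addrA lerDl.
  by rewrite addr_ge0 // sumr_ge0 // => ? _; [exact: nc_ge0 | rewrite sumr_ge0 // => ? _; exact: nc_ge0].
have ub : has_ubound S.
  exists (Num.sqrt ((m + m) ^+ 2 + (m + m) ^+ 2)) => r [v [hv ->]].
  rewrite vnorm2E in hv; have hv' := sqrt_le1 _ (addr_ge0 (sqr_ge0 _) (sqr_ge0 _)) hv.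
  have v0 : nc (v 0 0) <= 1 by have := nc_ge0 (v 0 0); have := nc_ge0 (v 1 0); nra.
  have v1 : nc (v 1 0) <= 1 by have := nc_ge0 (v 0 0); have := nc_ge0 (v 1 0); nra.
  have hi : forall i, nc ((M *m v) i 0) <= m + m.
    move=> i; rewrite mulmx_col; apply: le_trans (le_normcD _ _) _.
    rewrite !Normc.normcM.
    have := Mab i 0; have := Mab i 1; have := nc_ge0 (M i 0); have := nc_ge0 (M i 1).
    have := nc_ge0 (v 0 0); have := nc_ge0 (v 1 0).
    nra.
  rewrite vnorm2E; apply: ler_wsqrtr.
  have := hi 0; have := hi 1; have := nc_ge0 ((M *m v) 0 0); have := nc_ge0 ((M *m v) 1 0).
  nra.
have hk : k = 0 \/ k = 1.
  by case: k => [[|[|n]] hn]; [left|right|]; try apply: val_inj.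
pose e : 'cV[R[i]]_2 := \col_i ((i == k)%:R).
have he : vnorm2 e = 1.
  rewrite vnorm2E.
  rewrite /e !mxE; case: hk => -> /=;
  by rewrite !(expr1n, expr0n) /= ?(addr0, add0r) ?(sqrtr1, sqrtr0) ?(expr1n, expr0n) /= ?(addr0, add0r) sqrtr1.
have hMe : vnorm2 (M *m e) = Num.sqrt (nc (M 0 k) ^+ 2 + nc (M 1 k) ^+ 2).
  rewrite vnorm2E !mulmx_col.
  rewrite /e !mxE; case: hk => -> /=;
  by rewrite ?mulr1 ?mulr0 ?addr0 ?add0r.
have : vnorm2 (M *m e) <= specnorm M.
  apply: (ub_le_sup ub); exists e; split => //; by rewrite he.
rewrite hMe => h.
apply: sqrt_lt1; first by rewrite addr_ge0 // sqr_ge0.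
exact: le_lt_trans h hM.
Qed.

Lemma det_lt1 (M : 'M[R[i]]_2) : specnorm M < 1 -> nc (\det M) < 1.
Proof.
move=> hM; have h0 := specnorm_col M 0 hM; have h1 := specnorm_col M 1 hM.
rewrite det2; apply: le_lt_trans (le_normcD _ _) _.
rewrite (@normcN _ (M 0 1 * M 1 0)) !Normc.normcM.
move: h0 h1.
set x := nc (M 0 0); set y := nc (M 0 1); set z := nc (M 1 0); set w := nc (M 1 1).
move=> h0 h1.
have := sqr_ge0 (x - w); have := sqr_ge0 (y - z).
nra.
Qed.

Lemma trace_eq (A0 : 'M[R]_2) (P J : 'M[R[i]]_2) : P \in unitmx ->
  cplx_mx A0 = P *m J *m invmx P -> J 0 0 + J 1 1 = ((\tr A0)%:C)%C.
Proof.
move=> hP hA.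
have h : \tr (cplx_mx A0) = \tr J.
  by rewrite hA mxtrace_mulC (mulKmx hP).
have -> : J 0 0 + J 1 1 = \tr J by rewrite /mxtrace sum2.
by rewrite -h /mxtrace !sum2 /cplx_mx !mxE rmorphD.
Qed.

End S.

Local Close Scope classical_set_scope.

Theorem proposition3p3 (R : realType) (k : nat) (E : rel 'I_k)
    (A : 'I_k -> 'M[R]_2) (P J : 'I_k -> 'M[R[i]]_2) :
  no_self_loops E ->
  (forall i, P i \in unitmx) ->
  (forall i, is_jordan2 (J i)) ->
  (forall i, cplx_mx (A i) = P i *m J i *m invmx (P i)) ->
  (forall r s, E r s -> exists eta : R, 0 < eta /\
      specnorm (invmx (P s) *m P r *m expmx (eta%:C%C *: J r)) < 1) ->
  forall s : seq 'I_k, is_loop E s ->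
    exists2 j, j \in s & \tr (A j) < 0.
Proof.
move=> _ hPu hJ hA hE s [sne scyc].
case: (boolP (has (fun j => \tr (A j) < 0) s)) => [/hasP [j js hj] | /hasPn Hn].
  by exists j.
exfalso.
pose d r := Normc.normc (\det (P r)).
have dpos : forall r, 0 < d r.
  move=> r; rewrite /d lt_neqAle nc_ge0 andbT eq_sym; apply/eqP => /Normc.eq0_normc h0.
  by have := hPu r; rewrite unitmxE h0 unitr0.
have key : forall r s', r \in s -> E r s' -> d r < d s'.
  move=> r s' rs hrs.
  have tr0 : 0 <= \tr (A r) by have := Hn r rs; rewrite /= -leNgt.
  have [eta [eta0 hs]] := hE r s' hrs.
  have hd := @det_lt1 R _ hs.
  rewrite !det_mulmx det_inv in hd.
  have [J10 _] := hJ r.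
  have ht := @trace_eq R _ _ _ (hPu r) (hA r).
  rewrite (@det_expmx_real R _ _ _ J10 ht) in hd.
  rewrite !Normc.normcM Normc.normcV nc_real ger0_norm ?expR_ge0 // in hd.
  have ex1 : 1 <= expR (eta * \tr (A r)).
    by apply: le_trans (expR_ge1Dx _); rewrite lerDl mulr_ge0 // ltW.
  set x := expR (eta * \tr (A r)) in hd ex1.
  set u := (Normc.normc (\det (P s')))^-1 in hd.
  have hu : d s' * u = 1 by rewrite /u /d mulfV // gt_eqF // dpos.
  set y := u * Normc.normc (\det (P r)) * x in hd.
  have hy : d r * x = d s' * y by rewrite /y !mulrA hu mul1r.
  have := dpos s'; have := dpos r.
  nra.
case: s sne scyc key Hn => [//|x p] _ hcyc key _.
move: hcyc; rewrite /cycle => hp.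
have hp' : path [rel a b | d a < d b] x (rcons p x).
  apply: (@sub_in_path _ (mem (x :: p)) E) hp.
    by move=> a b ha _ hab; exact: key.
  apply/allP => y; rewrite /= !inE mem_rcons !inE.
  by case/orP => [->|] //.
rewrite path_sortedE in hp'; last by move=> a b c /= h1 h2; exact: lt_trans h1 h2.
move/andP: hp' => [/allP hall _].
by have := hall x; rewrite mem_rcons mem_head /= ltxx => /(_ isT).
Qed.
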